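(* Let $m\ge 2$ and let $n_1,\dots,n_m\ge 3$ be odd integers. Then the partition dimension of the odd chain cycle $\mathcal{C}(C_{n_1},\dots,C_{n_m})$ equals $3$.
   Context: Let $C_{n_1},\dots,C_{n_m}$ be pairwise disjoint cycles, $V(C_{n_i})=\{v^i_1,\dots,v^i_{n_i}\}$ with $v^i_j$ adjacent to $v^i_{j+1}$ (indices mod $n_i$). The odd chain cycle $\mathcal{C}(C_{n_1},\dots,C_{n_m})$ (all $n_i$ odd) is obtained from the disjoint union of these cycles by identifying $v^i_{(n_i+1)/2+1}$ with $v^{i+1}_1$ for each $i=1,\dots,m-1$. For an ordered partition $\Pi=\{Q_1,\dots,Q_k\}$ of $V(G)$, $r(v\mid\Pi)=(d(v,Q_1),\dots,d(v,Q_k))$ where $d(v,Q)=\min_{q\in Q}d(v,q)$; $\Pi$ is resolving if distinct vertices have distinct representations; the partition dimension $pd(G)$ is the minimum $k$ for which a resolving $k$-partition exists. *)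

(* Defs.v *)
From mathcomp Require Import all_boot.
Set Implicit Arguments. Unset Strict Implicit. Unset Printing Implicit Defensive.

Section GraphNotions.
Variables (T : finType) (e : rel T).

Fixpoint reach (k : nat) (x y : T) : bool :=
  if k is k'.+1 then reach k' x y || [exists z, e x z && reach k' z y]
  else x == y.

(* graph distance: the least k with a walk of length <= k from x to y.
   (Every distance in a connected graph is < #|T|; for unreachable
   pairs this returns #|T|.+1, which never happens for connected graphs.) *)
Definition dist (x y : T) : nat :=
  find (fun k => reach k x y) (iota 0 #|T|.+1).

Definition dist_set (v : T) (Q : {set T}) : nat :=
  \big[minn/#|T|.+1]_(q in Q) dist v q.

Definition is_ordered_partition (k : nat) (Pi : 'I_k -> {set T}) : Prop :=
  (forall i, Pi i != set0) /\
  (forall i j, i != j -> [disjoint Pi i & Pi j]) /\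
  (forall v : T, exists i, v \in Pi i).

Definition repr_vec (k : nat) (Pi : 'I_k -> {set T}) (v : T) : k.-tuple nat :=
  [tuple dist_set v (Pi i) | i < k].

Definition resolving (k : nat) (Pi : 'I_k -> {set T}) : Prop :=
  forall u v : T, repr_vec Pi u = repr_vec Pi v -> u = v.

Definition has_resolving_partition (k : nat) : Prop :=
  exists Pi : 'I_k -> {set T}, is_ordered_partition Pi /\ resolving Pi.

Definition partition_dimension_is (k : nat) : Prop :=
  has_resolving_partition k /\
  (forall k', k' < k -> ~ has_resolving_partition k').

End GraphNotions.

(* ---------- The odd chain cycle C(C_{n_1},...,C_{n_m}) ----------
   0-indexed: cycle i (0 <= i < m) has length n i and vertices (i, j),
   0 <= j < n i, with (i, j) ~ (i, (j+1) mod n i).  The paper's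
   identification of v^i_{(n_i+1)/2+1} with v^{i+1}_1 becomes, 0-indexed,
   (i, (n i + 1)/2) == (i+1, 0) for i+1 < m.  We use as representatives
   all pairs except (i, 0) with i > 0. *)
Section OddChain.
Variables (m : nat) (n : nat -> nat).

Definition chain_N := \max_(i < m) n i.

Definition chain_valid (p : nat * nat) : bool :=
  (p.1 < m) && (p.2 < n p.1) && ~~ ((p.2 == 0) && (0 < p.1)).

Definition chain_canon (i j : nat) : nat * nat :=
  if (j == 0) && (0 < i) then (i.-1, (n i.-1).+1 %/ 2) else (i, j).

Definition chain_vertex : Type :=
  {p : 'I_m * 'I_chain_N | chain_valid (nat_of_ord p.1, nat_of_ord p.2)}.

Definition chain_pair (v : chain_vertex) : nat * nat :=
  (nat_of_ord (val v).1, nat_of_ord (val v).2).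

Definition chain_edge : rel chain_vertex := fun u v =>
  [exists i : 'I_m, exists j : 'I_chain_N,
     (j < n i) &&
     (((chain_canon i j == chain_pair u) &&
       (chain_canon i ((j.+1) %% n i) == chain_pair v)) ||
      ((chain_canon i j == chain_pair v) &&
       (chain_canon i ((j.+1) %% n i) == chain_pair u)))].

End OddChain.

(* Main.v *)
Require Import Defs.
From mathcomp Require Import all_boot zify.
Set Implicit Arguments. Unset Strict Implicit. Unset Printing Implicit Defensive.

Section Gen.
Variables (T : finType) (e : rel T).

Lemma find_iota_le (P : pred nat) N i : i < N -> P i -> find P (iota 0 N) <= i.
Proof.
move=> iN Pi; rewrite leqNgt; apply/negP => lt.
have := before_find 0 lt; rewrite nth_iota; last by lia.
by rewrite add0n Pi.
Qed.

Lemma find_iota_P (P : pred nat) N : find P (iota 0 N) < N -> P (find P (iota 0 N)).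
Proof.
move=> lt; have := nth_find 0 (_ : has P (iota 0 N)).
rewrite nth_iota // add0n; apply.
by rewrite has_find size_iota.
Qed.

Lemma dist_le_size x y : dist e x y <= #|T|.+1.
Proof. by rewrite /dist -[X in _ <= X](size_iota 0 #|T|.+1) find_size. Qed.

Lemma dist_reach x y : dist e x y <= #|T| -> reach e (dist e x y) x y.
Proof. move=> h; apply: (find_iota_P (P := fun k => reach e k x y)); rewrite /dist in h; lia. Qed.

Lemma dist_le x y k : k <= #|T| -> reach e k x y -> dist e x y <= k.
Proof. move=> kN r; apply: (find_iota_le (P := fun k => reach e k x y)) => //; lia. Qed.

Lemma dist_xx x : dist e x x = 0.
Proof. apply/eqP; rewrite -leqn0; apply: dist_le => //=. Qed.

Lemma dist0 x y : dist e x y = 0 -> x = y.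
Proof.
move=> h; have : reach e (dist e x y) x y by apply: dist_reach; rewrite h.
by rewrite h /= => /eqP.
Qed.

Lemma reach_step k x z y : e x z -> reach e k z y -> reach e k.+1 x y.
Proof. by move=> xz r /=; apply/orP; right; apply/existsP; exists z; rewrite xz. Qed.

Lemma dist_lip a b q : e b a -> dist e b q <= (dist e a q).+1.
Proof.
move=> ba.
have [h|h] := leqP (dist e a q) #|T|; last by have := dist_le_size b q; lia.
have r := reach_step ba (dist_reach h).
have [h2|h2] := leqP (dist e a q).+1 #|T|; first exact: dist_le h2 r.
have := dist_le_size b q; lia.
Qed.

Lemma dist_edge a b : e a b -> dist e a b <= 1.
Proof.
move=> ab; apply: dist_le; last by apply: (reach_step ab) => /=.
by apply/card_gt0P; exists a.
Qed.

Lemma bigmin_le (Q : {set T}) v q : q \in Q -> dist_set e v Q <= dist e v q.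
Proof.
rewrite /dist_set => qQ.
have : q \in index_enum T by rewrite mem_index_enum.
elim: (index_enum T) => [//|a r IH]; rewrite inE big_cons => /orP [/eqP<-|qr].
  by rewrite qQ geq_minl.
case: ifP => _; last exact: IH.
by rewrite geq_min IH // orbT.
Qed.

Lemma bigmin_idx (Q : {set T}) v : dist_set e v Q <= #|T|.+1.
Proof.
rewrite /dist_set; elim: (index_enum T) => [|a r IH]; first by rewrite big_nil.
rewrite big_cons; case: ifP => // _; by rewrite geq_min IH orbT.
Qed.

Lemma bigmin_ge (Q : {set T}) v c : c <= #|T|.+1 ->
  (forall q, q \in Q -> c <= dist e v q) -> c <= dist_set e v Q.
Proof.
rewrite /dist_set => cN h; elim: (index_enum T) => [|a r IH]; first by rewrite big_nil.
rewrite big_cons; case: ifP => // aQ; by rewrite leq_min IH h.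
Qed.

Lemma dist_set0 (Q : {set T}) v : (dist_set e v Q == 0) = (v \in Q).
Proof.
apply/idP/idP => [/eqP h|vQ]; last by rewrite -leqn0 -(dist_xx v) bigmin_le.
apply/negPn/negP => vQ.
have : 1 <= dist_set e v Q.
  apply: bigmin_ge => // q qQ; rewrite lt0n; apply/eqP => /dist0 E.
  by subst; rewrite qQ in vQ.
by rewrite h.
Qed.

Lemma dist_set_lip (Q : {set T}) a b : e b a -> dist_set e b Q <= (dist_set e a Q).+1.
Proof.
move=> ba.
suff : (dist_set e b Q).-1 <= dist_set e a Q by lia.
apply: bigmin_ge; first by have := bigmin_idx Q b; lia.
move=> q qQ; have := bigmin_le b qQ; have := dist_lip q ba; lia.
Qed.

Lemma dist_set1 v x : dist_set e v [set x] = dist e v x.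
Proof.
apply/eqP; rewrite eqn_leq bigmin_le ?inE //.
by apply: bigmin_ge; [exact: dist_le_size| move=> q; rewrite inE => /eqP->].
Qed.

Lemma reach_pot (phi : T -> nat) x k v :
  phi x = 0 -> (forall u w, e u w -> phi u <= (phi w).+1) ->
  reach e k v x -> phi v <= k.
Proof.
move=> px lip; elim: k v => [|k IH] v /=; first by move/eqP->; rewrite px.
case/orP => [/IH|/existsP [z /andP [vz /IH]]]; first lia.
have := lip _ _ vz; lia.
Qed.

Lemma pot_reach (phi : T -> nat) x :
  (forall v, phi v = 0 -> v = x) ->
  (forall v, 0 < phi v -> exists w, e v w /\ phi w = (phi v).-1) ->
  forall k v, phi v = k -> reach e k v x.
Proof.
move=> p0 desc; elim=> [|k IH] v pv; first by rewrite (p0 _ pv) /=.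
have [w [vw pw]] := desc v (ltac:(lia)).
apply: (reach_step vw); apply: IH; lia.
Qed.

Lemma pot_bound (phi : T -> nat) :
  (forall v, 0 < phi v -> exists w, e v w /\ phi w = (phi v).-1) ->
  forall v, phi v < #|T|.
Proof.
move=> desc v.
have sub : {subset iota 0 (phi v).+1 <= [seq phi u | u <- enum T]}.
  move=> k; rewrite mem_iota add0n => /andP [_].
  elim: (phi v) {-2}v (erefl (phi v)) => [|p IH] u pu kle.
    by apply/mapP; exists u; rewrite ?mem_enum //; lia.
  have [kp|kp] := ltnP k (p.+2); last lia.
  have [->|kne] := eqVneq k p.+1; first by apply/mapP; exists u; rewrite ?mem_enum.
  have [w [_ pw]] := desc u (ltac:(lia)).
  apply: (IH w); lia.
have := uniq_leq_size (iota_uniq 0 (phi v).+1) sub.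
by rewrite size_iota size_map -cardE.
Qed.

Lemma dist_pot (phi : T -> nat) x :
  phi x = 0 ->
  (forall v, phi v = 0 -> v = x) ->
  (forall u w, e u w -> phi u <= (phi w).+1) ->
  (forall v, 0 < phi v -> exists w, e v w /\ phi w = (phi v).-1) ->
  forall v, dist e v x = phi v.
Proof.
move=> px p0 lip desc v.
have r := pot_reach p0 desc (erefl (phi v)).
have b := pot_bound desc v.
have d1 : dist e v x <= phi v by apply: dist_le => //; lia.
have := reach_pot px lip (dist_reach (ltac:(lia) : dist e v x <= #|T|)); lia.
Qed.

Lemma repr_eq k (Pi : 'I_k -> {set T}) u v :
  (forall i, dist_set e u (Pi i) = dist_set e v (Pi i)) -> repr_vec e Pi u = repr_vec e Pi v.
Proof. by move=> h; apply: eq_from_tnth => i; rewrite !tnth_mktuple. Qed.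

Lemma repr_coord k (Pi : 'I_k -> {set T}) u v i :
  repr_vec e Pi u = repr_vec e Pi v -> dist_set e u (Pi i) = dist_set e v (Pi i).
Proof. by move=> h; have := congr1 (fun t => tnth t i) h; rewrite !tnth_mktuple. Qed.

Lemma I2_cases (i0 j0 : 'I_2) : i0 != j0 -> forall i : 'I_2, i = i0 \/ i = j0.
Proof.
case: i0 j0 => [[|[|//]] ?] [[|[|//]] ?] // _ [[|[|//]] ?];
  by [left; apply/val_inj | right; apply/val_inj].
Qed.

Section Two.
Variables (Pi : 'I_2 -> {set T}) (i0 j0 : 'I_2) (a : T).
Hypotheses (part : is_ordered_partition Pi) (res : resolving e Pi)
  (ij : i0 != j0) (ai : a \in Pi i0).

Let d i v := dist_set e v (Pi i).

Lemma nb_cases b : e a b -> e b a -> b != a ->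
  (d i0 b = 1 /\ d j0 b = 0) \/ (d i0 b = 0 /\ (d j0 b).+1 = d j0 a) \/
  (d i0 b = 0 /\ d j0 b = (d j0 a).+1).
Proof.
move=> ab ba bna.
have da : d i0 a = 0 by apply/eqP; rewrite /d dist_set0.
have l1 := dist_set_lip (Pi i0) ba; have l2 := dist_set_lip (Pi j0) ba.
have l3 := dist_set_lip (Pi j0) ab.
rewrite -/(d i0 b) -/(d i0 a) in l1; rewrite -/(d j0 b) -/(d j0 a) in l2 l3.
have [z|nz] := eqVneq (d i0 b) 0.
  right.
  have [eq|ne] := eqVneq (d j0 b) (d j0 a); last lia.
  have : b = a.
    apply: res; apply: repr_eq => i; case: (I2_cases ij i) => ->; rewrite -/(d _ _) -/(d _ _) //.
    by rewrite z da.
  by move=> E; rewrite E eqxx in bna.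
left; split; first lia.
apply/eqP; rewrite /d dist_set0.
have [i bi] := (proj2 (proj2 part)) b.
case: (I2_cases ij i) bi => -> // bi.
by move: nz; rewrite /d dist_set0 bi.
Qed.

Let code b := if d i0 b == 1 then 0 else if d j0 b < d j0 a then 1 else 2.

Lemma code_inj b b' : e a b -> e b a -> b != a -> e a b' -> e b' a -> b' != a ->
  code b = code b' -> b = b'.
Proof.
move=> ab ba bna ab' b'a b'na.
have c1 := nb_cases ab ba bna; have c2 := nb_cases ab' b'a b'na.
rewrite /code => hc.
have [E1 E2] : d i0 b = d i0 b' /\ d j0 b = d j0 b'.
  case: c1 c2 => [[x1 x2]|[[x1 x2]|[x1 x2]]] [[y1 y2]|[[y1 y2]|[y1 y2]]];
  move: hc; rewrite x1 y1 /=; do 2?case: ifP; lia.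
apply: res; apply: repr_eq => i.
by case: (I2_cases ij i) => ->.
Qed.

Lemma no_four b1 b2 b3 b4 :
  (forall b, b \in [:: b1; b2; b3; b4] -> [/\ e a b, e b a & b != a]) ->
  uniq [:: b1; b2; b3; b4] -> False.
Proof.
move=> nb u.
have cl b : code b <= 2 by rewrite /code; case: ifP => //; case: ifP.
have ci b b' : b \in [:: b1; b2; b3; b4] -> b' \in [:: b1; b2; b3; b4] -> b != b' -> code b != code b'.
  move=> /nb [? ? ?] /nb [? ? ?] ne; apply/eqP => /code_inj E.
  by rewrite E // eqxx in ne.
move: u; rewrite /= !inE !negb_or -!andbA => /and3P [n12 n13 /and4P [n14 n23 n24 /andP [n34 _]]].
have := ci b1 b2 (mem_head _ _) (ltac:(by rewrite !inE eqxx orbT)) n12.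
have := ci b1 b3 (mem_head _ _) (ltac:(by rewrite !inE eqxx !orbT)) n13.
have := ci b1 b4 (mem_head _ _) (ltac:(by rewrite !inE eqxx !orbT)) n14.
have := ci b2 b3 (ltac:(by rewrite !inE eqxx !orbT)) (ltac:(by rewrite !inE eqxx !orbT)) n23.
have := ci b2 b4 (ltac:(by rewrite !inE eqxx !orbT)) (ltac:(by rewrite !inE eqxx !orbT)) n24.
have := ci b3 b4 (ltac:(by rewrite !inE eqxx !orbT)) (ltac:(by rewrite !inE eqxx !orbT)) n34.
have := cl b1; have := cl b2; have := cl b3; have := cl b4.
move: (code b1) (code b2) (code b3) (code b4) => x1 x2 x3 x4.
lia.
Qed.
End Two.

End Gen.


Definition cd (N j k : nat) := minn ((j - k) + (k - j)) (N - ((j - k) + (k - j))).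

Lemma succ_mod N j : j < N -> (j.+1 %% N) = if j.+1 == N then 0 else j.+1.
Proof.
move=> jN; case: eqP => [->|ne]; first by rewrite modnn.
by rewrite modn_small //; lia.
Qed.

Section Cyc.
Variables (t : nat).
Hypothesis t1 : 1 <= t.
Variable N : nat.
Hypothesis HN : N = t.*2.+1.

Lemma cd_le j k : j < N -> k < N -> cd N j k <= t.
Proof. rewrite /cd; lia. Qed.

Lemma cd_pos j k : j < N -> k < N -> j != k -> 0 < cd N j k.
Proof. rewrite /cd; lia. Qed.

Lemma cd_self j : cd N j j = 0.
Proof. rewrite /cd; lia. Qed.

Lemma cd_lip j k : j < N -> k < N ->
  cd N j k <= (cd N (j.+1 %% N) k).+1 /\ cd N (j.+1 %% N) k <= (cd N j k).+1.
Proof. move=> jN kN; rewrite succ_mod //; case: eqP; rewrite /cd; lia. Qed.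

Lemma cd_desc j k : j < N -> k < N -> 0 < cd N j k ->
  [\/ 0 < j /\ cd N (j - 1) k = cd N j k - 1, cd N (j.+1 %% N) k = cd N j k - 1 |
     j = 0 /\ cd N (N - 1) k = cd N j k - 1].
Proof.
move=> jN kN; rewrite succ_mod //; case: eqP => /= E p; rewrite /cd in p *.
- have [jk|jk] := leqP j k.
  + have [c|c] := leqP (k - j) t.
    * constructor 2; lia.
    * constructor 1; lia.
  + have [c|c] := leqP (j - k) t.
    * constructor 1; lia.
    * constructor 2; lia.
- have [jk|jk] := leqP j k.
  + have [c|c] := leqP (k - j) t.
    * constructor 2; lia.
    * have [j0|j0] := posnP j; [constructor 3|constructor 1]; lia.
  + have [c|c] := leqP (j - k) t.
    * constructor 1; lia.
    * constructor 2; lia.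
Qed.

Lemma cd0E j : j < N -> cd N j 0 = if j <= t then j else N - j.
Proof. move=> jN; case: ifP => h; rewrite /cd; lia. Qed.

Lemma cdhE j : j < N -> cd N j t.+1 = if j == 0 then t else if j <= t then t.+1 - j else j - t.+1.
Proof.
move=> jN; case: eqP => [->|h0]; first by rewrite /cd; lia.
case: ifP => h; rewrite /cd; lia.
Qed.

Lemma cd_inj j j' : j < N -> j' < N -> cd N j 0 = cd N j' 0 -> cd N j t.+1 = cd N j' t.+1 ->
  j = j'.
Proof.
move=> jN j'N; rewrite (cd0E jN) (cd0E j'N) (cdhE jN) (cdhE j'N).
case: ifP => a1; case: ifP => a2; case: ifP => a3; case: ifP => a4; try case: ifP => a5;
  try case: ifP => a6; lia.
Qed.

End Cyc.


Section Chain.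
Variables (m : nat) (n : nat -> nat).
Hypothesis Hm : 2 <= m.
Hypothesis Hn : forall i, i < m -> odd (n i) /\ 3 <= n i.

Definition P i := \sum_(0 <= k < i) (n k %/ 2).
Definition Phi (p : nat * nat) := P p.1 + cd (n p.1) p.2 0.
Definition Psi (p : nat * nat) := (P m - P p.1.+1) + cd (n p.1) p.2 ((n p.1).+1 %/ 2).

Lemma nE i : i < m -> n i = (n i %/ 2).*2.+1.
Proof. move=> im; have [o _] := Hn im; have := odd_double_half (n i); rewrite o divn2; lia. Qed.

Lemma t1 i : i < m -> 1 <= (n i %/ 2).
Proof. move=> im; have [_ h] := Hn im; have := nE im; lia. Qed.

Lemma PS i : P i.+1 = P i + (n i %/ 2).
Proof. by rewrite /P big_nat_recr. Qed.

Lemma P_mono i k : i <= k -> P i <= P k.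
Proof.
move=> ik; rewrite -(subnKC ik); elim: (k - i) => [|d IH]; first by rewrite addn0.
by rewrite addnS PS; lia.
Qed.

Lemma nN i : i < m -> n i <= chain_N m n.
Proof. by move=> im; rewrite /chain_N (leq_bigmax (F := fun k : 'I_m => n k) (Ordinal im)). Qed.

Lemma mkvert i j : chain_valid m n (i, j) -> exists v : chain_vertex m n, chain_pair v = (i, j).
Proof.
move=> V; have := V; rewrite /chain_valid /= => /andP [/andP [im jn] _].
have jN : j < chain_N m n by apply: leq_trans jn (nN im).
by exists (exist _ (Ordinal im, Ordinal jN) V).
Qed.

Lemma vvalid (v : chain_vertex m n) : chain_valid m n (chain_pair v).
Proof. by case: v. Qed.

Lemma pair_inj (u v : chain_vertex m n) : chain_pair u = chain_pair v -> u = v.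
Proof.
case: u v => [[a b] ?] [[c d] ?]; rewrite /chain_pair /= => E.
have E1 := congr1 fst E; have E2 := congr1 snd E; simpl in E1, E2.
apply: val_inj => /=; congr pair; exact: val_inj.
Qed.

Lemma canon_valid i j : i < m -> j < n i -> chain_valid m n (chain_canon n i j).
Proof.
move=> im jn; rewrite /chain_canon /chain_valid; case: ifP => /=.
  move=> /andP [_ i0].
  have a1 : i.-1 < m by lia.
  have a2 : (n i.-1).+1 %/ 2 < n i.-1 by have [_ h3] := Hn a1; have := nE a1; lia.
  have a3 : ((n i.-1).+1 %/ 2 == 0) = false by apply/eqP; have := nE a1; lia.
  by rewrite a1 a2 a3.
by move=> E; rewrite E im jn.
Qed.

Lemma canon_id p : chain_valid m n p -> chain_canon n p.1 p.2 = p.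
Proof. by case: p => i j; rewrite /chain_valid /chain_canon /= => /andP [_ /negbTE ->]. Qed.

Lemma edge_of i j (u w : chain_vertex m n) : i < m -> j < n i ->
  chain_pair u = chain_canon n i j -> chain_pair w = chain_canon n i (j.+1 %% n i) ->
  chain_edge u w /\ chain_edge w u.
Proof.
move=> im jn Hu Hw; have jN : j < chain_N m n by apply: leq_trans jn (nN im).
split; apply/existsP; exists (Ordinal im); apply/existsP; exists (Ordinal jN);
  by rewrite /= jn -Hu -Hw !eqxx ?orbT.
Qed.

Lemma edge_inv (u w : chain_vertex m n) : chain_edge u w -> exists i j, [/\ i < m, j < n i &
  (chain_pair u = chain_canon n i j /\ chain_pair w = chain_canon n i (j.+1 %% n i)) \/
  (chain_pair w = chain_canon n i j /\ chain_pair u = chain_canon n i (j.+1 %% n i))].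
Proof.
move=> /existsP [i /existsP [j /andP [jn /orP [/andP [/eqP A /eqP B]|/andP [/eqP A /eqP B]]]]];
  exists i, j; split => //; [left|right]; by split.
Qed.

Lemma pot_lip (F : nat * nat -> nat) :
  (forall i j, i < m -> j < n i ->
     F (chain_canon n i j) <= (F (chain_canon n i (j.+1 %% n i))).+1 /\
     F (chain_canon n i (j.+1 %% n i)) <= (F (chain_canon n i j)).+1) ->
  forall u w : chain_vertex m n, chain_edge u w -> F (chain_pair u) <= (F (chain_pair w)).+1.
Proof.
move=> h u w /edge_inv [i [j [im jn [[-> ->]|[-> ->]]]]]; have := h i j im jn; lia.
Qed.

Lemma canon_Phi i j : i < m -> j < n i -> Phi (chain_canon n i j) = Phi (i, j).
Proof.
move=> im jn; rewrite /chain_canon; case: ifP => // /andP [/eqP -> i0].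
have im' : i.-1 < m by lia.
have E := nE im'; rewrite /Phi /= -[in P i](prednK i0) PS /cd; lia.
Qed.

Lemma canon_Psi i j : i < m -> j < n i -> Psi (chain_canon n i j) = Psi (i, j).
Proof.
move=> im jn; rewrite /chain_canon; case: ifP => // /andP [/eqP -> i0].
have im' : i.-1 < m by lia.
have E := nE im'; have E2 := nE im.
have M : P i.+1 <= P m by apply: P_mono.
rewrite PS in M.
rewrite /Psi /= (prednK i0) /cd.
rewrite PS; lia.
Qed.

Lemma P0 : P 0 = 0.
Proof. by rewrite /P big_geq. Qed.

Section Pot.
Variables (B K : nat -> nat) (F : nat * nat -> nat).
Hypothesis FE : forall p, F p = B p.1 + cd (n p.1) p.2 (K p.1).
Hypothesis canonF : forall i j, i < m -> j < n i -> F (chain_canon n i j) = F (i, j).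
Hypothesis Kn : forall i, i < m -> K i < n i.

Lemma F_lip (u w : chain_vertex m n) : chain_edge u w -> F (chain_pair u) <= (F (chain_pair w)).+1.
Proof.
apply: pot_lip => i j im jn.
have jn' : j.+1 %% n i < n i by rewrite ltn_pmod //; lia.
rewrite !canonF // !FE /=.
have := cd_lip (t1 im) (nE im) jn (Kn im); lia.
Qed.

Lemma vert_of i j : i < m -> j < n i -> exists w : chain_vertex m n, chain_pair w = chain_canon n i j.
Proof. by move=> im jn; have := canon_valid im jn; case: (chain_canon n i j) => a b; exact: mkvert. Qed.

Lemma F_desc (v : chain_vertex m n) i j : chain_pair v = (i, j) -> 0 < cd (n i) j (K i) ->
  exists w, chain_edge v w /\ F (chain_pair w) = (F (chain_pair v)).-1.
Proof.
move=> pv c.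
have V := vvalid v; rewrite pv /chain_valid /= in V.
case/andP: V => /andP [im jn] nv.
have cid : chain_canon n i j = (i, j) by rewrite /chain_canon (negbTE nv).
have nn := nE im.
case: (cd_desc (t1 im) nn jn (Kn im) c).
- move=> [j0 cd1].
  have jn1 : j - 1 < n i by lia.
  have [w pw] := vert_of im jn1.
  have pv' : chain_pair v = chain_canon n i ((j - 1).+1 %% n i).
    by rewrite pv (_ : (j - 1).+1 = j) ?modn_small ?cid //; lia.
  have [_ e] := edge_of im jn1 pw pv'.
  exists w; split => //.
  by rewrite pw canonF // pv !FE /=; lia.
- move=> cd1.
  have jn' : j.+1 %% n i < n i by rewrite ltn_pmod //; lia.
  have [w pw] := vert_of im jn'.
  have pv' : chain_pair v = chain_canon n i j by rewrite pv cid.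
  have [e _] := edge_of im jn pv' pw.
  exists w; split => //.
  by rewrite pw canonF // pv !FE /=; lia.
- move=> [j0 cd1]; subst j.
  have jn1 : n i - 1 < n i by lia.
  have [w pw] := vert_of im jn1.
  have pv' : chain_pair v = chain_canon n i ((n i - 1).+1 %% n i).
    by rewrite pv (_ : (n i - 1).+1 = n i) ?modnn ?cid //; lia.
  have [_ e] := edge_of im jn1 pw pv'.
  exists w; split => //.
  by rewrite pw canonF // pv !FE /=; lia.
Qed.
End Pot.

Lemma valid_ij (v : chain_vertex m n) : exists i j, [/\ chain_pair v = (i, j), i < m, j < n i &
   ~~ ((j == 0) && (0 < i))].
Proof.
have V := vvalid v; case: (chain_pair v) V => i j; rewrite /chain_valid /= => /andP [/andP [im jn] nv].
by exists i, j.
Qed.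

Lemma hE i : i < m -> (n i).+1 %/ 2 = (n i %/ 2).+1.
Proof. move=> im; have := nE im; lia. Qed.

Lemma dist_x (x : chain_vertex m n) : chain_pair x = (0, 0) ->
  forall v, dist (@chain_edge m n) v x = Phi (chain_pair v).
Proof.
move=> px.
have FE : forall p, Phi p = P p.1 + cd (n p.1) p.2 ((fun _ => 0) p.1) by [].
have Kn : forall i, i < m -> (fun _ => 0) i < n i by move=> i im; have := Hn im; lia.
apply: (dist_pot (phi := fun v => Phi (chain_pair v))).
- rewrite px /Phi /= P0 /cd; lia.
- move=> v; have [i [j [pv im jn nv]]] := valid_ij v; rewrite pv /Phi /= => h.
  have j0 : j = 0 by move: h; rewrite /cd; lia.
  subst j; have i0 : i = 0 by move: nv; rewrite eqxx /=; lia.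
  by subst i; apply: pair_inj; rewrite pv px.
- exact: (F_lip FE canon_Phi Kn).
- move=> v; have [i [j [pv im jn nv]]] := valid_ij v => h.
  have [c|c] := posnP (cd (n i) j 0).
    have j0 : j = 0 by move: c; rewrite /cd; lia.
    subst j; have i0 : i = 0 by move: nv; rewrite eqxx /=; lia.
    move: h; rewrite pv /Phi /= i0 P0 /cd; lia.
  exact: (F_desc FE canon_Phi Kn pv c).
Qed.

Lemma dist_y (y : chain_vertex m n) : chain_pair y = (m.-1, (n m.-1).+1 %/ 2) ->
  forall v, dist (@chain_edge m n) v y = Psi (chain_pair v).
Proof.
move=> py.
have FE : forall p, Psi p = (fun i => P m - P i.+1) p.1 + cd (n p.1) p.2 ((fun i => (n i).+1 %/ 2) p.1) by [].
have Kn : forall i, i < m -> (fun i => (n i).+1 %/ 2) i < n i by move=> i im; have := Hn im; have := nE im; lia.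
apply: (dist_pot (phi := fun v => Psi (chain_pair v))).
- by rewrite py /Psi /= prednK ?subnn /cd //; lia.
- move=> v; have [i [j [pv im jn nv]]] := valid_ij v; rewrite pv /Psi /= => h.
  have jh : j = (n i).+1 %/ 2 by move: h; have := Hn im; have := nE im; rewrite /cd; lia.
  have im1 : i = m.-1.
    have [lt|] := ltnP i.+1 m; last lia.
    have := P_mono lt; rewrite PS; have := t1 lt; lia.
  by apply: pair_inj; rewrite pv py jh im1.
- exact: (F_lip (B := fun i => P m - P i.+1) FE canon_Psi Kn).
- move=> v; have [i [j [pv im jn nv]]] := valid_ij v => h.
  have [c|c] := posnP (cd (n i) j ((n i).+1 %/ 2)); last exact: (F_desc (B := fun i => P m - P i.+1) FE canon_Psi Kn pv c).
  have jh : j = (n i).+1 %/ 2 by move: c; have := Hn im; have := nE im; rewrite /cd; lia.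
  have lt : i.+1 < m.
    have [//|ge] := ltnP i.+1 m.
    by move: h; rewrite pv /Psi /= c (_ : i.+1 = m) ?subnn //; lia.
  have jn1 : n i.+1 - 1 < n i.+1 by have := Hn lt; lia.
  have [w pw] := vert_of lt jn1.
  have pv' : chain_pair v = chain_canon n i.+1 ((n i.+1 - 1).+1 %% n i.+1).
    rewrite pv (_ : (n i.+1 - 1).+1 = n i.+1) ?modnn; last by have := Hn lt; lia.
    by rewrite /chain_canon /= jh.
  have [_ e] := edge_of lt jn1 pw pv'.
  exists w; split => //.
  rewrite pw canon_Psi // pv /Psi /= c.
  have := P_mono lt; have := P_mono (ltnW lt); rewrite !PS.
  have := Hn lt; have := nE lt; rewrite /cd -subn1; lia.
Qed.

Lemma pot_inj (u v : chain_vertex m n) :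
  Phi (chain_pair u) = Phi (chain_pair v) -> Psi (chain_pair u) = Psi (chain_pair v) -> u = v.
Proof.
have [i [j [pu im jn nu]]] := valid_ij u; have [i' [j' [pv im' jn' nv]]] := valid_ij v.
rewrite pu pv /Phi /Psi /= => E1 E2.
have key : forall a b a' b', a < m -> b < n a -> a' < m -> b' < n a' ->
    ~~ ((b' == 0) && (0 < a')) -> a < a' -> P a + cd (n a) b 0 != P a' + cd (n a') b' 0.
  move=> a b a' b' am bn am' bn' nb lt.
  have b'0 : b' != 0 by apply: contraNneq nb => ->; rewrite eqxx /=; lia.
  have p := cd_pos (t1 am') (nE am') bn' (_ : 0 < n a') b'0.
  have q := cd_le (t1 am) (nE am) bn (_ : 0 < n a).
  have := P_mono lt; rewrite PS => r.
  apply/eqP; lia.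
have ii : i = i'.
  case: (ltngtP i i') => // lt.
  - by move: (key _ _ _ _ im jn im' jn' nv lt); rewrite E1 eqxx.
  - by move: (key _ _ _ _ im' jn' im jn nu lt); rewrite E1 eqxx.
subst i'.
have jj : j = j'.
  apply: (cd_inj (t1 im) (nE im)) => //; first lia.
  by rewrite -hE //; have := P_mono im; rewrite PS; lia.
by apply: pair_inj; rewrite pu pv jj.
Qed.

End Chain.


Lemma neqp m n (u v : chain_vertex m n) a b c d :
  chain_pair u = (a, b) -> chain_pair v = (c, d) -> (a != c) || (b != d) -> u != v.
Proof.
move=> pu pv h; apply/eqP => E; move: h; rewrite -E pu in pv; case: pv => -> ->.
by rewrite !eqxx.
Qed.

Lemma valid_intro m n i j : i < m -> j < n i -> (j = 0 -> i = 0) -> chain_valid m n (i, j).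
Proof.
move=> im jn h; rewrite /chain_valid /= im jn /=; apply/negP => /andP [/eqP j0].
by rewrite (h j0).
Qed.

Lemma canon0 n j : chain_canon n 0 j = (0, j).
Proof. by rewrite /chain_canon andbF. Qed.

Lemma lower2 m n (Pi : 'I_2 -> {set chain_vertex m n}) :
  2 <= m ->
  (forall i, i < m -> odd (n i) /\ 3 <= n i) ->
  is_ordered_partition Pi -> resolving (@chain_edge m n) Pi -> False.
Proof.
move=> Hm Hn part res.
have [_ [_ cov]] := part.
have m1' : 1 < m by [].
have m0 : 0 < m by lia.
have [o0 n03] := Hn 0 m0.
have [o1 n13] := Hn 1 m1'.
have E0 := nE Hm Hn m0.
have E1 := nE Hm Hn m1'.
have h0n : (n 0).+1 %/ 2 < n 0 by clear -E0 n03; lia.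
have t0n : n 0 %/ 2 < n 0 by clear -E0 n03; lia.
have th : (n 0 %/ 2).+1 = (n 0).+1 %/ 2 by clear -E0 n03; lia.
have n11 : n 1 - 1 < n 1 by clear -n13; lia.
have n11' : (n 1 - 1).+1 = n 1 by clear -n13; lia.
have [a pa] : exists a : chain_vertex m n, chain_pair a = (0, (n 0).+1 %/ 2).
  by apply: mkvert; apply: valid_intro.
have [b1 p1] : exists b : chain_vertex m n, chain_pair b = (0, n 0 %/ 2).
  by apply: mkvert; apply: valid_intro.
have [b2 p2] : exists b : chain_vertex m n, chain_pair b = (0, ((n 0).+1 %/ 2).+1 %% n 0).
  apply: mkvert; apply: valid_intro => //; rewrite ltn_pmod //; clear -n03; lia.
have [b3 p3] : exists b : chain_vertex m n, chain_pair b = (1, 1).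
  apply: mkvert; apply: valid_intro => //; clear -n13; lia.
have [b4 p4] : exists b : chain_vertex m n, chain_pair b = (1, n 1 - 1).
  by apply: mkvert; apply: valid_intro => // h; exfalso; clear -h n13; lia.
have [e1 e1'] : chain_edge b1 a /\ chain_edge a b1.
  apply: (edge_of (i := 0) (j := n 0 %/ 2) m0 t0n); first by rewrite canon0.
  by rewrite canon0 pa modn_small th.
have [e2 e2'] : chain_edge a b2 /\ chain_edge b2 a.
  by apply: (edge_of (i := 0) (j := (n 0).+1 %/ 2) m0 h0n); rewrite canon0.
have [e3 e3'] : chain_edge a b3 /\ chain_edge b3 a.
  apply: (edge_of (i := 1) (j := 0) m1'); first by clear -n13; lia.
    by rewrite pa /chain_canon.
  by rewrite p3 modn_small; [rewrite /chain_canon | clear -n13; lia].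
have [e4 e4'] : chain_edge b4 a /\ chain_edge a b4.
  apply: (edge_of (i := 1) (j := n 1 - 1) m1' n11).
    rewrite p4 /chain_canon; case: ifP => // /andP [/eqP h _]; clear -h n13; lia.
  by rewrite pa n11' modnn /chain_canon.
have [i0 ai] := cov a.
have [j0 ij] : exists j0 : 'I_2, i0 != j0.
  by case: i0 {ai} => [[|[|//]] p]; [exists (@Ordinal 2 1 isT) | exists (@Ordinal 2 0 isT)].
have sm := succ_mod h0n.
have c2 : ((n 0).+1 %/ 2).+1 %% n 0 != (n 0).+1 %/ 2.
  rewrite sm; case: ifP => _; apply/eqP; clear -E0 n03; lia.
have c1 : n 0 %/ 2 != (n 0).+1 %/ 2 by apply/eqP; clear -E0 n03; lia.
have c12 : n 0 %/ 2 != ((n 0).+1 %/ 2).+1 %% n 0.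
  rewrite sm; case: ifP => _; apply/eqP; clear -E0 n03; lia.
have c34 : 1 != n 1 - 1 by apply/eqP; clear -n13; lia.
apply: (no_four part res ij ai (b1 := b1) (b2 := b2) (b3 := b3) (b4 := b4)).
  move=> b; rewrite !inE => /or4P [] /eqP ->; (split; [assumption|assumption|]).
  - by apply: neqp p1 pa _; rewrite c1 orbT.
  - by apply: neqp p2 pa _; rewrite c2 orbT.
  - by apply: neqp p3 pa _.
  - by apply: neqp p4 pa _.
rewrite /= !inE !negb_or.
rewrite (neqp p1 p2 (_ : _ || _)) ?c12 ?orbT //.
rewrite (neqp p1 p3 (_ : _ || _)) //.
rewrite (neqp p1 p4 (_ : _ || _)) //.
rewrite (neqp p2 p3 (_ : _ || _)) //.
rewrite (neqp p2 p4 (_ : _ || _)) //.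
by rewrite (neqp p3 p4 (_ : _ || _)) ?c34 ?orbT.
Qed.

Theorem theorem2p5 (m : nat) (n : nat -> nat) :
  2 <= m ->
  (forall i, i < m -> odd (n i) /\ 3 <= n i) ->
  partition_dimension_is (@chain_edge m n) 3.
Proof.
move=> Hm Hn.
have [o0 n03] := Hn 0 (ltac:(lia)).
have m1 : m.-1 < m by lia.
have [om n3m] := Hn _ m1.
have E0 := nE Hm Hn (ltac:(lia) : 0 < m).
have Em := nE Hm Hn m1.
have [x px] : exists x : chain_vertex m n, chain_pair x = (0, 0).
  apply: mkvert; apply: valid_intro; lia.
have [y py] : exists y : chain_vertex m n, chain_pair y = (m.-1, (n m.-1).+1 %/ 2).
  apply: mkvert; apply: valid_intro; lia.
have [z pz] : exists z : chain_vertex m n, chain_pair z = (0, 1).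
  apply: mkvert; apply: valid_intro; lia.
have xy : x != y by apply: neqp px py _; apply/orP; left; apply/eqP; lia.
have xz : z != x by apply: neqp pz px _; apply/orP; right; apply/eqP; lia.
have yz : z != y by apply: neqp pz py _; apply/orP; left; apply/eqP; lia.
split.
- pose Pi := fun k : 'I_3 => if val k == 0 then [set x] else if val k == 1 then [set y]
                             else ~: [set x; y].
  exists Pi; split.
  + split; [|split].
    * case=> [[|[|[|//]]] p]; apply/set0Pn; rewrite /Pi /=.
      - by exists x; rewrite inE.
      - by exists y; rewrite inE.
      - by exists z; rewrite !inE negb_or xz yz.
    * move=> i j; case: i j => [[|[|[|//]]] p] [[|[|[|//]]] q] //= ne;
        rewrite disjoint_subset; apply/subsetP => v; rewrite /Pi /= !inE;
        try (by move: ne; rewrite /eq_op /=);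
        first [ by move=> /eqP -> | by move=> /eqP ->; rewrite eq_sym
              | by rewrite negb_or => /andP [] | by move=> /eqP ->; rewrite eqxx ?orbT].
    * move=> v; case: (eqVneq v x) => [->|vx].
        by exists (@Ordinal 3 0 isT); rewrite /Pi /= inE.
      case: (eqVneq v y) => [->|vy].
        by exists (@Ordinal 3 1 isT); rewrite /Pi /= inE.
      by exists (@Ordinal 3 2 isT); rewrite /Pi /= !inE negb_or vx vy.
  + move=> u v H.
    have c0 := repr_coord (@Ordinal 3 0 isT) H.
    have c1 := repr_coord (@Ordinal 3 1 isT) H.
    rewrite /Pi /= !dist_set1 in c0 c1.
    rewrite !(dist_x Hm Hn px) in c0.
    rewrite !(dist_y Hm Hn py) in c1.
    exact: (pot_inj Hm Hn c0 c1).
- move=> k lt [Pi [part res]].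
  have [_ [_ cov]] := part.
  case: k lt Pi part res cov => [|[|[|//]]] _ Pi part res cov.
  + by have [[i ?] _] := cov x.
  + have [i xi] := cov x; have [i' yi] := cov y.
    have ii : i' = i by apply: val_inj; case: i i' {xi yi} => [[|//] ?] [[|//] ?].
    subst i'.
    have : x = y.
      apply: res; apply: repr_eq => j.
      have -> : j = i by apply: val_inj; case: i j {xi yi} => [[|//] ?] [[|//] ?].
      by move: xi yi; rewrite -!(dist_set0 (@chain_edge m n)) => /eqP -> /eqP ->.
    by move=> E; rewrite E eqxx in xy.
  + exact: (lower2 Hm Hn part res).
Qed.
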